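(* Assume the conditional linking at random (CLAR) assumption $P(L=1\mid \tilde{T}, \Delta, Q=0, \mathbf{X}) = P(L=1\mid Q=0, \mathbf{X})$ holds. Then for any $(\boldsymbol\beta,\lambda_0)$, $$\mathbb{E}\big(l(\boldsymbol\beta,\lambda_0)\big) = \mathbb{E}\left[\frac{I(L+Q>0)\, l(\boldsymbol\beta,\lambda_0)}{Q + (1-Q)\,P(L=1\mid \mathbf{X}, Q=0)}\right],$$ where $l(\boldsymbol\beta,\lambda_0) = \log\big(\lambda(\tilde{T}\mid \mathbf{X})^{\Delta} S(\tilde{T}\mid \mathbf{X})\big)$ is the Cox log-likelihood contribution of a single observation, with $\lambda(t\mid\mathbf{X}) = \lambda_0(t)\exp(\boldsymbol\beta^T\mathbf{X})$ and $S(t\mid\mathbf{X})$ the corresponding conditional survival function.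
   Context: Participants of a clinical trial are possibly linked to an observational follow-up dataset. $T$ is the failure time, $C_1$ the censoring time within the trial, $C_2$ the censoring time in the observational follow-up, $C=\max(C_1,C_2)$, $\tilde{T}=\min(T,C)$, $\Delta=I(T\le C)$, $Q=I(T\le C_1)$ is the in-trial event indicator, $L\in\{0,1\}$ the linkage indicator, and $\mathbf{X}\in\mathbb{R}^p$ the (time-independent) covariates including treatment. The pair $(\tilde{T},\Delta)$ is observed when $L=1$ or $Q=1$, and missing when $L=0,Q=0$. Expectations are over $(L,Q,\tilde{T},\Delta,\mathbf{X})$, and $P(L=1\mid \mathbf{X},Q=0)>0$ so the weight is well defined. *)

(* Defs.v *)
From HB Require Import structures.
From mathcomp Require Import all_boot all_order all_algebra.
From mathcomp Require Import all_classical all_reals all_analysis.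
Set Implicit Arguments. Unset Strict Implicit. Unset Printing Implicit Defensive.
Import Order.TTheory GRing.Theory Num.Theory.
Local Open Scope classical_set_scope.
Local Open Scope ring_scope.

Section Model.
Context {d : measure_display} {Omega : measurableType d} {R : realType}.

Definition cens (C1 C2 : Omega -> R) (w : Omega) : R := Num.max (C1 w) (C2 w).
Definition obs_time (T C1 C2 : Omega -> R) (w : Omega) : R :=
  Num.min (T w) (cens C1 C2 w).
Definition event_ind (T C1 C2 : Omega -> R) (w : Omega) : bool :=
  T w <= cens C1 C2 w.
Definition trial_ind (T C1 : Omega -> R) (w : Omega) : bool := T w <= C1 w.

Definition linpred (p : nat) (beta : 'I_p -> R) (X : 'I_p -> Omega -> R)
  (w : Omega) : R := \sum_(i < p) beta i * X i w.

Definition sigma_X (p : nat) (X : 'I_p -> Omega -> R) : set (set Omega) :=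
  <<s [set A | exists i B, measurable B /\ A = X i @^-1` B] >>.

Definition sigma_TDX (p : nat) (Tt : Omega -> R) (Dl : Omega -> bool)
  (X : 'I_p -> Omega -> R) : set (set Omega) :=
  <<s [set A | (exists B, measurable B /\ A = Tt @^-1` B)
            \/ A = [set w | Dl w]
            \/ (exists i B, measurable B /\ A = X i @^-1` B)] >>.

(* pi is a version of P(L = 1 | G, Q = 0) for the sigma-algebra G:
   pi is G-measurable and, for every A in G,
   E[ 1{L=1} 1{Q=0} 1_A ] = E[ pi 1{Q=0} 1_A ]. *)
Definition cond_prob_L1_Q0 (P : probability Omega R) (G : set (set Omega))
  (L Qb : Omega -> bool) (pi : Omega -> R) : Prop :=
  (forall B : set R, measurable B -> G (pi @^-1` B)) /\
  forall A, G A ->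
    (\int[P]_(w in A `&` [set w | ~~ Qb w]) (if L w then 1 else 0)%:E =
     \int[P]_(w in A `&` [set w | ~~ Qb w]) (pi w)%:E)%E.

Definition cumhaz (lambda0 : R -> R) (t : R) : \bar R :=
  (\int[lebesgue_measure]_(s in `[0%R, t]%classic) (lambda0 s)%:E)%E.

Definition cox_hazard (lambda0 : R -> R) (lp : R) (t : R) : R :=
  lambda0 t * expR lp.

Definition cox_surv (lambda0 : R -> R) (lp : R) (t : R) : \bar R :=
  expeR (- (cumhaz lambda0 t * (expR lp)%:E))%E.

Definition cox_loglik (p : nat) (beta : 'I_p -> R) (lambda0 : R -> R)
  (X : 'I_p -> Omega -> R) (Tt : Omega -> R) (Dl : Omega -> bool)
  (w : Omega) : \bar R :=
  lne ((if Dl w then (cox_hazard lambda0 (linpred beta X w) (Tt w))%:E else 1%E)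
       * cox_surv lambda0 (linpred beta X w) (Tt w))%E.

End Model.

(* Main.v *)
Require Import Defs.
From HB Require Import structures.
From mathcomp Require Import all_boot all_order all_algebra.
From mathcomp Require Import all_classical all_reals all_analysis.
From mathcomp Require Import measurable_realfun.
Import Order.TTheory GRing.Theory Num.Theory.
Import HBNNSimple.
Local Open Scope classical_set_scope.
Local Open Scope ring_scope.

Lemma nd_rmeas (R : realType) (g : R -> \bar R) :
  (forall x y : R, (x <= y)%R -> (g x <= g y)%E) -> measurable_fun [set: R] g.
Proof.
move=> nd; apply: (measurability _ (ErealGenOInfty.measurableE R)) => // _ [_ [r ->] <-].
rewrite setTI; apply: is_interval_measurable => x y /= gx gy z /andP[xz zy].
move: gx; rewrite /= !in_itv /= !andbT => gx.
exact: (lt_le_trans gx (nd _ _ xz)).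
Qed.

Lemma nd_emeas (R : realType) (g : \bar R -> \bar R) :
  (forall x y : \bar R, (x <= y)%E -> (g x <= g y)%E) -> measurable_fun [set: \bar R] g.
Proof.
move=> nd; apply: (measurability _ (ErealGenOInfty.measurableE R)) => // _ [_ [r ->] <-].
rewrite setTI.
set U := g @^-1` _.
have -> : U = EFin @` (EFin @^-1` U) `|` (U `&` [set -oo%E; +oo%E]).
  apply/seteqP; split => x.
    case: x => [s| |] Ux; [left; exists s|right|right] => //; split => //; by [right|left].
  by move=> [[s Us <-]|[]].
apply: measurableU.
  apply: measurable_image_EFin; apply: is_interval_measurable => x y /= gx gy z /andP[xz zy].
  move: gx; rewrite /U /= !in_itv /= !andbT => gx.
  by apply: (lt_le_trans gx); apply: nd; rewrite lee_fin.
have m1 x : measurable (U `&` [set x]).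
  have [Ux|nUx] := pselect (U x).
    rewrite (_ : _ `&` _ = [set x]); first exact: emeasurable_set1.
    by apply/seteqP; split => [y [] //|y ->].
  rewrite (_ : _ `&` _ = set0) //.
  by apply/seteqP; split => [y [Uy yx]|//]; apply: nUx; rewrite -yx.
by rewrite setIUr; apply: measurableU.
Qed.

Section core.
Context d (Om : measurableType d) (R : realType) (mu : {measure set Om -> \bar R}).
Variable GS : set (set Om).
Hypothesis hsub : forall A, <<s GS>> A -> measurable A.
Variables (Q0 : set Om) (mQ0 : measurable Q0).
Local Notation TG := (g_sigma_algebraType GS).

Lemma G2O d' (U : measurableType d') (g : Om -> U) :
  measurable_fun (setT : set TG) g -> measurable_fun (setT : set Om) g.
Proof. by move=> mg _ B mB; apply: hsub; exact: (mg measurableT B mB). Qed.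

Lemma Ind (f : Om -> R) (A : set Om) :
  (\int[mu]_(w in Q0) (f w * \1_A w)%:E = \int[mu]_(w in A `&` Q0) (f w)%:E)%E.
Proof.
rewrite integral_mkcond [RHS]integral_mkcond; apply: eq_integral => w _.
rewrite /patch indicE.
have [Aw|nAw] := boolP (w \in A); have [Qw|nQw] := boolP (w \in Q0).
- by rewrite mem_set ?mulr1//; split; apply: set_mem.
- rewrite memNset //; move=> [] _ Qw'; move/negP: nQw; apply; exact: mem_set.
- rewrite mulr0 memNset //; move=> [] Aw' _; move/negP: nAw; apply; exact: mem_set.
- rewrite memNset //; move=> [] _ Qw'; move/negP: nQw; apply; exact: mem_set.
Qed.

Variable h : TG -> \bar R.
Hypothesis mh : measurable_fun setT h.
Hypothesis h0 : forall w, (0 <= h w)%E.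

Let mA n k : measurable (dyadic_approx (setT : set TG) h n k : set Om).
Proof.
rewrite /dyadic_approx; case: ifPn => [kn|_]//.
apply: hsub; rewrite -preimage_comp.
by apply: mh => //; apply/measurable_image_EFin; exact: measurable_itv.
Qed.

Let mB n : measurable (integer_approx (setT : set TG) h n : set Om).
Proof. by apply: hsub; exact: (emeasurable_fun_c_infty measurableT mh). Qed.

Lemma stepB (f : Om -> R) (mf : measurable_fun setT f) (f0 : forall w, Q0 w -> 0 <= f w) n :
  (\int[mu]_(w in Q0) ((f w)%:E * (approx (setT : set TG) h n w)%:E) =
   \sum_(k < n * 2 ^ n) (k%:R * 2 ^- n)%:E *
      \int[mu]_(w in dyadic_approx (setT : set TG) h n k `&` Q0) (f w)%:E +
   (n%:R)%:E * \int[mu]_(w in integer_approx (setT : set TG) h n `&` Q0) (f w)%:E)%E.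
Proof.
set N := (n * 2 ^ n)%N.
set A := dyadic_approx _ h n. set B := integer_approx _ h n.
have mfA (C : set Om) : measurable C -> measurable_fun setT (fun w => (f w * \1_C w)%:E).
  by move=> mC; apply/measurable_EFinP; apply: measurable_funM => //; exact: measurable_indic.
have fA0 (C : set Om) w : Q0 w -> (0 <= (f w * \1_C w)%:E)%E.
  by move=> Qw; rewrite lee_fin mulr_ge0 ?f0.
have c0 (k : nat) : (0 <= (k%:R * 2 ^- n : R)%:E)%E.
  by rewrite lee_fin mulr_ge0 // invr_ge0 exprn_ge0.
transitivity (\int[mu]_(w in Q0) (\sum_(k < N) ((k%:R * 2 ^- n)%:E * (f w * \1_(A k) w)%:E) +
                                  (n%:R)%:E * (f w * \1_B w)%:E))%E.
  apply: eq_integral => w _; rewrite /approx -/A -/B.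
  rewrite -!EFinM sumEFin -EFinD; congr (_%:E).
  rewrite mulrDr mulr_sumr; congr (_ + _); last by rewrite mulrCA.
  by apply: eq_bigr => k _; rewrite mulrCA.
rewrite ge0_integralD //; last 4 first.
- by move=> w Qw; apply: sume_ge0 => k _; apply: mule_ge0; [exact: c0|exact: fA0].
- apply: measurable_funTS; apply: emeasurable_sum => k.
  by apply: measurable_funeM; apply: mfA; exact: mA.
- by move=> w Qw; apply: mule_ge0; [rewrite lee_fin|exact: fA0].
- by apply: measurable_funTS; apply: measurable_funeM; apply: mfA; first (exact: mA || exact: mB).
rewrite ge0_integral_sum //; last 2 first.
- by move=> k; apply: measurable_funTS; apply: measurable_funeM; apply: mfA; first (exact: mA || exact: mB).
- by move=> k w Qw; apply: mule_ge0; [exact: c0|exact: fA0].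
have hZ (C : set Om) (c : R) : measurable C -> 0 <= c ->
    (\int[mu]_(x in Q0) (c%:E * (f x * \1_C x)%:E) = c%:E * \int[mu]_(w in C `&` Q0) (f w)%:E)%E.
  move=> mC c0'; rewrite ge0_integralZl //; first by rewrite Ind.
  - by apply: measurable_funTS; exact: mfA.
  - by move=> w Qw; exact: fA0.
congr (_ + _); last by rewrite hZ //; exact: mB.
apply: eq_bigr => k _; by rewrite hZ //; exact: mA.
Qed.

Lemma key (f : Om -> R) (mf : measurable_fun setT f) (f0 : forall w, Q0 w -> 0 <= f w) :
  (\int[mu]_(w in Q0) ((f w)%:E * h w) =
   limn (fun n => \int[mu]_(w in Q0) ((f w)%:E * (approx (setT : set TG) h n w)%:E)))%E.
Proof.
have ma n : measurable_fun (setT : set Om) (approx (setT : set TG) h n).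
  apply: G2O.
  have -> : approx (setT : set TG) h n = nnsfun_approx (measurableT : measurable (setT : set TG)) mh n.
    by rewrite nnsfun_approxE.
  exact: measurable_funPT.
have a0 n w : 0 <= approx (setT : set TG) h n w.
  have -> : approx (setT : set TG) h n = nnsfun_approx (measurableT : measurable (setT : set TG)) mh n.
    by rewrite nnsfun_approxE.
  exact: fun_ge0.
rewrite -monotone_convergence //.
- apply: eq_integral => w Qw; apply/esym/cvg_lim => //; apply: cvgeZl => //.
  exact: (ecvg_approx (fun x _ => h0 x) (I : [set: TG] w)).
- move=> n; apply: measurable_funTS; apply: emeasurable_funM; apply/measurable_EFinP => //.
- by move=> n w Qw; rewrite -EFinM lee_fin mulr_ge0 ?f0.
- move=> w Qw m n mn; rewrite lee_wpmul2l ?lee_fin ?f0 //.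
  by have /lefP := nd_approx (setT : set TG) h mn; apply.
Qed.

Lemma core (f1 f2 : Om -> R) (mf1 : measurable_fun setT f1) (mf2 : measurable_fun setT f2)
  (f10 : forall w, Q0 w -> 0 <= f1 w) (f20 : forall w, Q0 w -> 0 <= f2 w)
  (heq : forall A, <<s GS>> A ->
     (\int[mu]_(w in A `&` Q0) (f1 w)%:E = \int[mu]_(w in A `&` Q0) (f2 w)%:E)%E) :
  (\int[mu]_(w in Q0) ((f1 w)%:E * h w) = \int[mu]_(w in Q0) ((f2 w)%:E * h w))%E.
Proof.
rewrite (key f1 mf1 f10) (key f2 mf2 f20); congr (lim (_ @ \oo)); apply/funext => n.
rewrite !stepB //; congr (_ + _); last first.
  by rewrite heq //; exact: (emeasurable_fun_c_infty measurableT mh).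
apply: eq_bigr => k _; rewrite heq //.
rewrite /dyadic_approx; case: ifPn => [kn|_]; last exact: sigma_algebra0.
rewrite -preimage_comp.
by apply: mh => //; apply/measurable_image_EFin; exact: measurable_itv.
Qed.

End core.


Lemma lne_nd (R : realType) (x y : \bar R) : (x <= y)%E -> (lne x <= lne y)%E.
Proof.
move=> xy; have [x0|x0] := leP x 0%E; first by rewrite le0_lneNy // leNye.
rewrite lee_lne // in_itv /= ?leey ?(ltW x0) //.
by rewrite (le_trans (ltW x0) xy).
Qed.

Lemma expeR_nd (R : realType) (x y : \bar R) : (x <= y)%E -> (expeR x <= expeR y)%E.
Proof. by rewrite lee_expeR. Qed.

Lemma cumhaz_nd (R : realType) (lambda0 : R -> R) (mlam : measurable_fun setT lambda0)
  (lam_ge0 : forall t, 0 <= lambda0 t) (s t : R) : s <= t -> (cumhaz lambda0 s <= cumhaz lambda0 t)%E.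
Proof.
move=> st; rewrite /cumhaz; apply: ge0_subset_integral => //.
- by apply: measurable_funTS; apply/measurable_EFinP.
- by move=> x _; rewrite lee_fin.
- by move=> x /=; rewrite !in_itv /= => /andP[h1 h2]; rewrite h1 (le_trans h2 st).
Qed.


Lemma funeposMf (T : Type) (R : realType) (a : T -> R) (f : T -> \bar R) :
  (forall x, 0 <= a x) -> funepos (fun x => (a x)%:E * f x)%E = (fun x => (a x)%:E * funepos f x)%E.
Proof. move=> a0; apply/funext => x; rewrite !funeposE maxe_pMr ?lee_fin // mule0; exact: erefl. Qed.

Lemma funenegMf (T : Type) (R : realType) (a : T -> R) (f : T -> \bar R) :
  (forall x, 0 <= a x) -> funeneg (fun x => (a x)%:E * f x)%E = (fun x => (a x)%:E * funeneg f x)%E.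
Proof. move=> a0; apply/funext => x; rewrite !funenegE -muleN maxe_pMr ?lee_fin // mule0; exact: erefl. Qed.

Theorem proposition3p1
  (d : measure_display) (Omega : measurableType d) (R : realType)
  (P : probability Omega R) (p : nat)
  (T C1 C2 : Omega -> R) (L : Omega -> bool) (X : 'I_p -> Omega -> R)
  (pi : Omega -> R)
  (mT : measurable_fun setT T) (mC1 : measurable_fun setT C1)
  (mC2 : measurable_fun setT C2) (mL : measurable [set w | L w])
  (mX : forall i, measurable_fun setT (X i))
  (* pi = P(L = 1 | X, Q = 0) *)
  (hpi : cond_prob_L1_Q0 P (sigma_X X) L (trial_ind T C1) pi)
  (* positivity: P(L = 1 | X, Q = 0) > 0 *)
  (hpos : forall w, ~~ trial_ind T C1 w -> 0 < pi w)
  (* CLAR: P(L = 1 | T~, Delta, Q = 0, X) = P(L = 1 | Q = 0, X) *)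
  (hCLAR : cond_prob_L1_Q0 P
             (sigma_TDX (obs_time T C1 C2) (event_ind T C1 C2) X)
             L (trial_ind T C1) pi)
  (beta : 'I_p -> R) (lambda0 : R -> R)
  (mlam : measurable_fun setT lambda0) (lam_ge0 : forall t, 0 <= lambda0 t) :
  (\int[P]_w cox_loglik beta lambda0 X (obs_time T C1 C2) (event_ind T C1 C2) w =
   \int[P]_w (((if L w || trial_ind T C1 w then 1 else 0)
              / ((trial_ind T C1 w)%:R + (1 - (trial_ind T C1 w)%:R) * pi w))%:E
             * cox_loglik beta lambda0 X (obs_time T C1 C2) (event_ind T C1 C2) w))%E.
Proof.
set Q := trial_ind T C1. set Tt := obs_time T C1 C2. set Dl := event_ind T C1 C2.
set l := cox_loglik beta lambda0 X Tt Dl.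
set GS := [set A | (exists B, measurable B /\ A = Tt @^-1` B) \/ A = [set w | Dl w]
            \/ (exists i B, measurable B /\ A = X i @^-1` B)].
set Q0 := [set w | ~~ Q w].
have mTt : measurable_fun setT Tt by apply: measurable_minr => //; exact: measurable_maxr.
have mQb : measurable_fun setT (fun w => Q w) by exact: measurable_fun_ler.
have mDlb : measurable_fun setT (fun w => Dl w).
  by apply: measurable_fun_ler => //; exact: measurable_maxr.
have mQ0 : measurable Q0.
  rewrite (_ : Q0 = setT `&` (fun w => Q w) @^-1` [set false]); first exact: mQb.
  by rewrite setTI; apply/seteqP; split => w /=; [move/negbTE|move=> h; apply/negbT].
have hsub : forall A, <<s GS>> A -> measurable A.
  apply: smallest_sub; first exact: sigma_algebra_measurable.
  move=> A [[B [mB ->]]|[->|[i [B [mB ->]]]]].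
  - by rewrite -[_ @^-1` _]setTI; exact: mTt.
  - by rewrite -[X in measurable X]setTI; exact: (mDlb measurableT [set true]).
  - by rewrite -[_ @^-1` _]setTI; exact: (mX i).
pose TG := g_sigma_algebraType GS.
have mTtG : measurable_fun (setT : set TG) Tt.
  by move=> _ B mB; rewrite setTI; apply: sub_sigma_algebra; left; exists B.
have mDlG : measurable_fun (setT : set TG) Dl.
  apply: (measurable_fun_bool true) => /=; rewrite setTI.
  by apply: sub_sigma_algebra; right; left.
have mXG i : measurable_fun (setT : set TG) (X i).
  by move=> _ B mB; rewrite setTI; apply: sub_sigma_algebra; right; right; exists i, B.
have sXG : forall A, sigma_X X A -> <<s GS>> A.
  apply: smallest_sub; first exact: smallest_sigma_algebra.
  by move=> A [i [B [mB ->]]]; apply: sub_sigma_algebra; right; right; exists i, B.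
have mpiG : measurable_fun (setT : set TG) pi.
  by move=> _ B mB; rewrite setTI; apply: sXG; exact: hpi.1.
have mlpG : measurable_fun (setT : set TG) (linpred beta X).
  rewrite /linpred; apply: measurable_sum => i.
  by apply: measurable_funM => //; exact: mXG.
have mlG : measurable_fun (setT : set TG) l.
  rewrite /l /cox_loglik; apply: measurableT_comp; first exact: (@nd_emeas R _ (@lne_nd R)).
  apply: emeasurable_funM.
    apply: measurable_fun_ifT => //; apply/measurable_EFinP.
    apply: measurable_funM; first exact: measurableT_comp mlam mTtG.
    exact: measurableT_comp (@measurable_expR R) mlpG.
  rewrite /cox_surv; apply: measurableT_comp; first exact: (@nd_emeas R _ (@expeR_nd R)).
  apply: measurableT_comp; first exact: oppe_measurable.
  apply: emeasurable_funM.
    apply: measurableT_comp mTtG; exact: (@nd_rmeas R _ (@cumhaz_nd R lambda0 mlam lam_ge0)).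
  by apply/measurable_EFinP; exact: measurableT_comp (@measurable_expR R) mlpG.
have W0 : forall w, 0 <= (if L w || Q w then 1 else 0) / ((Q w)%:R + (1 - (Q w)%:R) * pi w).
  move=> w; case Qw: (Q w); first by rewrite orbT /= subrr mul0r addr0 divr1.
  rewrite /= subr0 mul1r add0r divr_ge0 //; first by case: (L w).
  by apply: ltW; apply: hpos; rewrite -/(Q w) Qw.
have K (g : Omega -> \bar R) : measurable_fun (setT : set TG) g -> (forall w, 0 <= g w)%E ->
    (\int[P]_w g w = \int[P]_w (((if L w || Q w then 1 else 0)
              / ((Q w)%:R + (1 - (Q w)%:R) * pi w))%:E * g w))%E.
  move=> mg g0.
  have mLb : measurable_fun (setT : set Omega) (fun w => if L w then 1 else 0 : R).
    apply: measurable_fun_ifT => //; apply: (measurable_fun_bool true) => /=.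
    by rewrite setTI.
  have mgO : measurable_fun (setT : set Omega) g by exact: (@G2O _ _ GS hsub _ _ g mg).
  have mW : measurable_fun (setT : set Omega) (fun w => (if L w || Q w then 1 else 0)
              / ((Q w)%:R + (1 - (Q w)%:R) * pi w)).
    have -> : (fun w => (if L w || Q w then 1 else 0)
              / ((Q w)%:R + (1 - (Q w)%:R) * pi w)) =
        (fun w => if Q w then 1 else (if L w then 1 else 0) * expR (- ln (pi w))).
      apply/funext => w; case Qw: (Q w); first by rewrite orbT /= subrr mul0r addr0 divr1.
      have pw : 0 < pi w by apply: hpos; rewrite -/(Q w) Qw.
      by rewrite orbF /= subr0 mul1r add0r expRN lnK ?posrE.
    apply: measurable_fun_ifT => //; apply: measurable_funM => //.
    apply: measurableT_comp; first exact: measurable_expR.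
    apply: measurableT_comp; first exact: oppr_measurable.
    apply: measurableT_comp; first exact: measurable_ln.
    exact: (@G2O _ _ GS hsub _ _ pi mpiG).
  have sp (f : Omega -> \bar R) : measurable_fun setT f -> (forall w, 0 <= f w)%E ->
      (\int[P]_(w in ~` Q0 `|` Q0) f w = \int[P]_(w in ~` Q0) f w + \int[P]_(w in Q0) f w)%E.
    move=> mf f0; apply: ge0_integral_setU => //.
    all: try (by rewrite setvU); try (by rewrite disj_set2E setICl); try exact: measurableC.
  have Wg0 : forall w, (0 <= ((if L w || Q w then 1 else 0)
              / ((Q w)%:R + (1 - (Q w)%:R) * pi w))%:E * g w)%E.
    by move=> w; apply: mule_ge0 => //; rewrite lee_fin.
  have mWg : measurable_fun setT (fun w => ((if L w || Q w then 1 else 0)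
              / ((Q w)%:R + (1 - (Q w)%:R) * pi w))%:E * g w)%E.
    by apply: emeasurable_funM => //; exact/measurable_EFinP.
  rewrite -(setvU Q0) !sp //.
  congr (_ + _)%E.
    apply: eq_integral => w; rewrite inE /= => /negP; rewrite negbK => Qw.
    by rewrite Qw orbT /= subrr mul0r addr0 divr1 mul1e.
  pose hh w := ((expR (- ln (pi w)))%:E * g w)%E.
  have mhh : measurable_fun (setT : set TG) hh.
    apply: emeasurable_funM => //; apply/measurable_EFinP.
    apply: measurableT_comp; first exact: measurable_expR.
    apply: measurableT_comp; first exact: oppr_measurable.
    by apply: measurableT_comp; [exact: measurable_ln|exact: mpiG].
  have hh0 w : (0 <= hh w)%E by apply: mule_ge0 => //; rewrite lee_fin expR_ge0.
  transitivity (\int[P]_(w in Q0) ((pi w)%:E * hh w))%E.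
    apply: eq_integral => w; rewrite inE /= => Qw; have pw := hpos w Qw.
    by rewrite /hh muleA -EFinM expRN lnK ?posrE // mulfV ?gt_eqF // mul1e.
  transitivity (\int[P]_(w in Q0) ((if L w then 1 else 0 : R)%:E * hh w))%E.
    symmetry; apply: (@core _ _ _ P GS hsub Q0 mQ0 hh mhh hh0) => //.
    - exact: (@G2O _ _ GS hsub _ _ pi mpiG).
    - by move=> w _; case: (L w).
    - by move=> w Qw; apply: ltW; exact: hpos.
    - by move=> A GA; exact: hCLAR.2.
  apply: eq_integral => w; rewrite inE /= => Qw.
  rewrite /hh muleA -EFinM; congr (_ * _)%E; congr (_%:E).
  by rewrite (negbTE Qw) orbF /= subr0 mul1r add0r expRN lnK ?posrE ?hpos.
rewrite integralE [RHS]integralE funeposMf // funenegMf //.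
congr (_ - _)%E; apply: K.
- exact: measurable_funepos.
- exact: funepos_ge0.
- exact: measurable_funeneg.
- exact: funeneg_ge0.
Qed.
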